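(* The ring $s'(\mathbb{Z}^d)$ (for any $d\ge1$) is a Hermite ring.
   Context: For $\mathbf{n}\in\mathbb{Z}^d$, $\|\mathbf{n}\|_1$ denotes the $1$-norm. $s'(\mathbb{Z}^d)$ is the set of all maps $\mathbf{a}:\mathbb{Z}^d\to\mathbb{C}$ for which there exist $M>0$ and $k\in\mathbb{N}$ with $|\mathbf{a}(\mathbf{n})|\le M(1+\|\mathbf{n}\|_1)^k$ for all $\mathbf{n}\in\mathbb{Z}^d$; it is a commutative unital ring under pointwise operations. For a commutative unital ring $R$, $U_N(R)$ denotes the set of $N$-tuples $(a_1,\dots,a_N)\in R^N$ for which there exist $b_1,\dots,b_N\in R$ with $b_1a_1+\cdots+b_Na_N=1$. $R$ is a Hermite ring if for every $N\in\mathbb{N}$ and every $(a_1,\dots,a_N)\in U_N(R)$ there exists a matrix $A\in R^{N\times N}$, invertible in $R^{N\times N}$, whose first column is $(a_1,\dots,a_N)^{\top}$, i.e. $A_{i1}=a_i$ for $i=1,\dots,N$. *)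

(* Defs.v *)
From HB Require Import structures.
From mathcomp Require Import all_boot all_order all_algebra.
From mathcomp Require Import boolp classical_sets functions reals.
From mathcomp Require Import complex.

Set Implicit Arguments.
Unset Strict Implicit.
Unset Printing Implicit Defensive.

Import Order.TTheory GRing.Theory Num.Theory.
Local Open Scope ring_scope.
Local Open Scope complex_scope.

Definition unimodular (S : comPzRingType) (N : nat) (a : 'I_N -> S) : Prop :=
  exists b : 'I_N -> S, \sum_(i < N) b i * a i = 1.

Definition invertible_mx (S : comPzRingType) (N : nat) (A : 'M[S]_N) : Prop :=
  exists B : 'M[S]_N, A *m B = 1%:M /\ B *m A = 1%:M.

Definition hermite_ring (S : comPzRingType) : Prop :=
  forall (N : nat) (a : 'I_N.+1 -> S), unimodular a ->
    exists A : 'M[S]_N.+1, invertible_mx A /\ forall i : 'I_N.+1, A i ord0 = a i.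

Definition Zd (d : nat) := 'I_d -> int.

Definition norm1 (d : nat) (n : Zd d) : nat := (\sum_(i < d) `|n i|)%N.

Definition tempered (R : realType) (d : nat) (a : Zd d -> R[i]) : Prop :=
  exists (M : R) (k : nat), 0 < M /\
    forall n : Zd d, `|a n| <= ((M * (1 + (norm1 n)%:R) ^+ k)%:C).

Definition temperedb (R : realType) (d : nat) : {pred Zd d -> R[i]} :=
  fun a => `[< tempered a >].

Section SPrime.
Variables (R : realType) (d : nat).

Lemma lec_real (x y : R) : x <= y -> x%:C <= y%:C.
Proof.
by move=> h; rewrite -subr_ge0 -rmorphB /= ler0c subr_ge0.
Qed.

Let p (n : Zd d) : R := 1 + (norm1 n)%:R.

Let p_ge1 n : 1 <= p n.
Proof. by rewrite /p lerDl. Qed.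

Let p_ge0 n : 0 <= p n.
Proof. exact: le_trans (p_ge1 n). Qed.

Let pexp_le n k1 k2 : p n ^+ k1 <= p n ^+ (k1 + k2).
Proof.
rewrite exprD ler_peMr ?exprn_ge0 //; exact: exprn_ege1.
Qed.

Lemma tempered_subring : subring_closed (@temperedb R d).
Proof.
split.
- apply/asboolP; exists 1, 0%N; split => // n.
  by rewrite expr0 mulr1 /GRing.one /= normr1.
- move=> a b /asboolP [M1 [k1 [M1p Ha]]] /asboolP [M2 [k2 [M2p Hb]]].
  apply/asboolP; exists (M1 + M2), (k1 + k2)%N; split; first exact: addr_gt0.
  move=> n; rewrite /GRing.add /GRing.opp /=.
  apply: le_trans (ler_normB _ _) _.
  apply: le_trans (lerD (Ha n) (Hb n)) _.
  rewrite -rmorphD /=; apply: lec_real; rewrite mulrDl.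
  apply: lerD; apply: ler_wpM2l; [exact: ltW|exact: pexp_le|exact: ltW|].
  by rewrite addnC; apply: pexp_le.
- move=> a b /asboolP [M1 [k1 [M1p Ha]]] /asboolP [M2 [k2 [M2p Hb]]].
  apply/asboolP; exists (M1 * M2), (k1 + k2)%N; split; first exact: mulr_gt0.
  move=> n; rewrite /GRing.mul /= normrM.
  apply: le_trans (ler_pM _ _ (Ha n) (Hb n)) _; rewrite ?normr_ge0 //.
  by rewrite -rmorphM /= exprD; apply: lec_real; rewrite mulrACA.
Qed.

HB.instance Definition _ :=
  GRing.isSubringClosed.Build (Zd d -> R[i]) (@temperedb R d) tempered_subring.

Record sprime := SPrime { sprime_val : Zd d -> R[i];
                          _ : sprime_val \in @temperedb R d }.

HB.instance Definition _ := [isSub for sprime_val].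
HB.instance Definition _ := [Choice of sprime by <:].
HB.instance Definition _ := GRing.SubChoice_isSubComPzRing.Build _ _ sprime tempered_subring.

End SPrime.

(* Main.v *)
Require Import Defs.
From HB Require Import structures.
From mathcomp Require Import all_boot all_order all_algebra.
From mathcomp Require Import boolp classical_sets functions reals.
From mathcomp Require Import complex.
From mathcomp Require Import ring lra.
Import Order.TTheory GRing.Theory Num.Theory.
Local Open Scope ring_scope.
Local Open Scope complex_scope.
Section Alg.
Variable S : comPzRingType.

Lemma sum_dl N (i : 'I_N) (F : 'I_N -> S) : \sum_l ((i == l)%:R * F l) = F i.
Proof.
rewrite (bigD1 i) //= eqxx mul1r big1 ?addr0 // => l Hl.
by rewrite eq_sym (negbTE Hl) mul0r.
Qed.

Lemma sum_dr N (k : 'I_N) (F : 'I_N -> S) : \sum_l (F l * (l == k)%:R) = F k.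
Proof.
rewrite (bigD1 k) //= eqxx mulr1 big1 ?addr0 // => l Hl.
by rewrite (negbTE Hl) mulr0.
Qed.

Lemma herm_alg N (a : 'I_N.+1 -> S) (c : 'I_N -> S) (v : S) :
  v * (a ord0 + \sum_(l < N) c l * a (lift ord0 l)) = 1 ->
  exists A : 'M[S]_N.+1, invertible_mx A /\ forall i, A i ord0 = a i.
Proof.
move=> Hv.
pose A : 'M[S]_N.+1 := \matrix_(i, k)
  (if unlift ord0 k is Some k' then
     (if unlift ord0 i is Some i' then (i' == k')%:R else - c k')
   else a i).
pose B : 'M[S]_N.+1 := \matrix_(i, k)
  match unlift ord0 i, unlift ord0 k with
  | None, None => v
  | None, Some k' => v * c k'
  | Some i', None => - (v * a i)
  | Some i', Some k' => (i' == k')%:R - v * a i * c k'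
  end.
set X := \sum_(l < N) c l * a (lift ord0 l) in Hv.
have AB : A *m B = 1%:M.
  apply/matrixP => i k; rewrite !mxE big_ord_recl !mxE unlift_none.
  under eq_bigr do rewrite !mxE liftK.
  case: (unliftP ord0 i) => [i'|] ->; rewrite ?liftK ?unlift_none;
  case: (unliftP ord0 k) => [k'|] ->; rewrite ?liftK ?unlift_none.
  - rewrite sum_dl (inj_eq (@lift_inj _ ord0)); ring.
  - by rewrite sum_dl eq_sym (negbTE (neq_lift _ _)) /=; ring.
  - rewrite (negbTE (neq_lift _ _)) /=.
    under eq_bigr do rewrite mulrBr.
    rewrite sumrB sum_dr.
    have -> : \sum_i (- c i * (v * a (lift ord0 i) * c k')) = - (v * c k') * X
      by rewrite /X mulr_sumr; apply: eq_bigr => l _; ring.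
    transitivity (c k' * (v * (a ord0 + X)) - c k'); first by ring.
    by rewrite Hv mulr1 subrr.
  - have -> : \sum_i (- c i * - (v * a (lift ord0 i))) = v * X
      by rewrite /X mulr_sumr; apply: eq_bigr => l _; ring.
    by rewrite eqxx; transitivity (v * (a ord0 + X)); [ring | rewrite Hv].
exists A; split; last by move=> i; rewrite mxE unlift_none.
by exists B; split => //; apply: mulmx1C.
Qed.
End Alg.

Section Real.
Variable R : realType.

Lemma amgm (t y T : R) : 0 <= t -> t <= T -> 1 <= T -> 0 <= y ->
  2 * T * (t * y) <= t + T ^+ 3 * y ^+ 2.
Proof.
move=> t0 tT T1 y0.
have h1 : 0 <= t * (1 - T * y) ^+ 2 by apply: mulr_ge0 => //; apply: sqr_ge0.
have h2 : 0 <= (T - t) * (T ^+ 2 * y ^+ 2).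
  by apply: mulr_ge0; [rewrite subr_ge0 | apply: mulr_ge0; apply: sqr_ge0].
nra.
Qed.

Lemma real_key N (y t : 'I_N.+1 -> R) :
  (forall i, 0 <= y i) -> (forall i, 0 <= t i) ->
  1 <= \sum_i t i * y i ->
  1 <= 2 * (N.+1%:R * (1 + \sum_i t i ^+ 2)) ^+ 2 *
       (y ord0 + \sum_(l < N) y (lift ord0 l) ^+ 2).
Proof.
move=> y0 t0 H1.
set T := N.+1%:R * (1 + \sum_i t i ^+ 2).
set s := \sum_(l < N) y (lift ord0 l) ^+ 2.
have sq0 : 0 <= \sum_i t i ^+ 2 by apply: sumr_ge0 => i _; apply: sqr_ge0.
have N1 : 1 <= N.+1%:R :> R by rewrite ler1n.
have T1 : 1 <= T.
  rewrite /T -[1]mul1r; apply: ler_pM => //; lra.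
have tb : forall i, t i <= 1 + \sum_i t i ^+ 2.
  move=> i; rewrite (bigD1 i) //=.
  have : 0 <= \sum_(j | j != i) t j ^+ 2 by apply: sumr_ge0 => j _; apply: sqr_ge0.
  have := sqr_ge0 (t i - 1/2).
  nra.
have tT : forall i, t i <= T.
  move=> i; apply: le_trans (tb i) _; rewrite /T -[X in X <= _]mul1r.
  apply: ler_wpM2r => //; lra.
have hsum : \sum_(l < N) t (lift ord0 l) <= T.
  have e : \sum_i t i = t ord0 + \sum_(l < N) t (lift ord0 l) by rewrite big_ord_recl.
  have : \sum_i t i <= \sum_(i < N.+1) (1 + \sum_i t i ^+ 2).
    by apply: ler_sum => i _; apply: tb.
  rewrite sumr_const card_ord -mulr_natl -/T => h.
  have := t0 ord0; lra.
have hl : 2 * T * \sum_(l < N) t (lift ord0 l) * y (lift ord0 l) <=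
          \sum_(l < N) t (lift ord0 l) + T ^+ 3 * s.
  rewrite mulr_sumr /s mulr_sumr -big_split /=.
  by apply: ler_sum => l _; apply: amgm.
have h0 : 2 * T * (t ord0 * y ord0) <= 2 * T ^+ 3 * y ord0.
  have p1 : 0 <= (T - t ord0) * (T * y ord0).
    apply: mulr_ge0; first by rewrite subr_ge0 tT.
    apply: mulr_ge0 => //; lra.
  have p2 : 0 <= (T - 1) * (T * (T * y ord0)).
    apply: mulr_ge0; first lra.
    apply: mulr_ge0; first lra. apply: mulr_ge0 => //; lra.
  nra.
have e1 : \sum_i t i * y i = t ord0 * y ord0 + \sum_(l < N) t (lift ord0 l) * y (lift ord0 l)
  by rewrite big_ord_recl.
have s0 : 0 <= s by apply: sumr_ge0 => l _; apply: sqr_ge0.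
have yy := y0 ord0.
have A : 2 * T * 1 <= 2 * T * \sum_i t i * y i.
  by apply: ler_wpM2l => //; lra.
rewrite e1 in A.
have B : T <= T ^+ 3 * (2 * y ord0 + s) by lra.
have C : 1 <= T ^+ 2 * (2 * y ord0 + s).
  rewrite -(ler_pM2l (_ : 0 < T)); last lra.
  by rewrite mulr1 mulrA -exprS.
have D : 0 <= T ^+ 2 * s by apply: mulr_ge0 => //; apply: sqr_ge0.
lra.
Qed.
Local Notation nz := (@Normc.normc R).
Lemma nzE (z : R[i]) : `|z| = (nz z)%:C. Proof. by []. Qed.
Lemma nz_ge0 (z : R[i]) : 0 <= nz z. Proof. by rewrite -ler0c -nzE normr_ge0. Qed.
Lemma sqnz (z : R[i]) : z * conjc z = ((nz z) ^+ 2)%:C.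
Proof. by rewrite -sqr_normc rmorphXn. Qed.
Lemma normC_ge0 (x : R) : 0 <= x -> `|x%:C| = x%:C.
Proof. by move=> h; rewrite ger0_norm // ler0c. Qed.

Lemma ckey N (A B : 'I_N.+1 -> R[i]) : \sum_i B i * A i = 1 ->
  let w := if A ord0 == 0 then 1 else A ord0 / `|A ord0| in
  let U := A ord0 + \sum_(l < N) (w * conjc (A (lift ord0 l))) * A (lift ord0 l) in
  U != 0 /\ `|U^-1| <= `|2 * (N.+1%:R * (1 + \sum_i B i * conjc (B i))) ^+ 2|.
Proof.
move=> H w U.
set y := fun i => nz (A i).
set t := fun i => nz (B i).
set sR := \sum_(l < N) y (lift ord0 l) ^+ 2.
have sR0 : 0 <= sR by apply: sumr_ge0 => l _; apply: sqr_ge0.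
have eU : U = A ord0 + w * sR%:C.
  rewrite /U /sR rmorph_sum mulr_sumr; congr (_ + _); apply: eq_bigr => l _.
  by rewrite -mulrA (mulrC (conjc _)) sqnz.
have HU : `|U| = (y ord0 + sR)%:C.
  rewrite eU /w; case: eqP => [A0|A0].
    by rewrite A0 mul1r add0r normC_ge0 // /y A0 Normc.normc0 add0r.
  have nA : `|A ord0| != 0 by rewrite normr_eq0; apply/eqP.
  have -> : A ord0 + A ord0 / `|A ord0| * sR%:C = A ord0 / `|A ord0| * (`|A ord0| + sR%:C).
    by rewrite mulrDr divfK.
  rewrite !normrM normfV normr_id divff // mul1r rmorphD /= -nzE ger0_norm //.
  by apply: addr_ge0 => //; rewrite ler0c.
have Ht : 1 <= \sum_i t i * y i.
  rewrite -lecR rmorph1 rmorph_sum /= -(@normr1 R[i]) -H.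
  apply: le_trans (ler_norm_sum _ _ _) _.
  by rewrite le_eqVlt; apply/orP; left; apply/eqP; apply: eq_bigr => i _; rewrite normrM rmorphM.
have K := @real_key N y t (fun i => nz_ge0 (A i)) (fun i => nz_ge0 (B i)) Ht.
set T := N.+1%:R * (1 + \sum_i t i ^+ 2) in K.
have X0 : 0 < y ord0 + sR.
  rewrite lt_def addr_ge0 ?nz_ge0 // andbT; apply/eqP => e.
  by move: K; rewrite -/sR e mulr0 ler10.
have eG : 2 * (N.+1%:R * (1 + \sum_i B i * conjc (B i))) ^+ 2 = (2 * T ^+ 2)%:C.
  have eS : \sum_i B i * conjc (B i) = (\sum_i t i ^+ 2)%:C.
    by rewrite rmorph_sum; apply: eq_bigr => i _; rewrite sqnz.
  rewrite eS /T rmorphM rmorph_nat rmorphXn rmorphM rmorph_nat rmorphD rmorph1 //.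
split.
  rewrite -normr_eq0 HU; apply/eqP => e.
  have e' : y ord0 + sR = 0 by apply: complexI; rewrite e.
  by move: X0; rewrite e' ltxx.
rewrite eG normC_ge0; last by apply: mulr_ge0 => //; apply: sqr_ge0.
rewrite normfV HU -fmorphV lecR -div1r ler_pdivrMr //.
Qed.
End Real.

Section Glue.
Variables (R : realType) (d : nat).
Local Notation S := (sprime R d).
Definition mkS {f : Zd d -> R[i]} (H : tempered f) : S := @SPrime R d f (asboolT H).

Lemma tdom (f : Zd d -> R[i]) (g : S) : (forall n, `|f n| <= `|val g n|) -> tempered f.
Proof.
move=> Hfg; have /asboolP [M [k [M0 HM]]] := valP g.
by exists M, k; split => // n; apply: le_trans (Hfg n) (HM n).
Qed.

Arguments tdom {f g}.

Lemma conj_dom (x : S) n : `|conjc (val x n)| <= `|val x n|.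
Proof. by rewrite normcJ. Qed.

Definition conjS (x : S) : S := mkS (@tdom (fun n => conjc (val x n)) x (conj_dom x)).

Lemma vM (x y : S) n : val (x * y) n = val x n * val y n.
Proof. by rewrite rmorphM. Qed.
Lemma vD (x y : S) n : val (x + y) n = val x n + val y n.
Proof. by rewrite rmorphD. Qed.
Lemma v1' n : val (1 : S) n = 1.
Proof. by rewrite rmorph1. Qed.
Lemma vX (x : S) k n : val (x ^+ k) n = val x n ^+ k.
Proof. by rewrite rmorphXn exprfctE. Qed.
Lemma vnat k n : val (k%:R : S) n = k%:R.
Proof. by rewrite rmorph_nat natmulfctE. Qed.
Lemma vsum I (r : seq I) (P : pred I) (F : I -> S) n :
  val (\sum_(i <- r | P i) F i) n = \sum_(i <- r | P i) val (F i) n.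
Proof. by rewrite rmorph_sum fct_sumE. Qed.

Lemma analytic N (a b : 'I_N.+1 -> S) : \sum_i b i * a i = 1 ->
  exists (c : 'I_N -> S) (v : S), v * (a ord0 + \sum_(l < N) c l * a (lift ord0 l)) = 1.
Proof.
move=> H.
have v1 : forall n, val (1 : S) n = 1 by move=> n; rewrite rmorph1.
have Hn : forall n, \sum_i val (b i) n * val (a i) n = 1.
  move=> n; have := congr1 (fun x : S => val x n) H.
  rewrite v1 rmorph_sum fct_sumE => <-.
  by apply: eq_bigr => i _; rewrite rmorphM.
pose wf n := if val (a ord0) n == 0 then 1 else val (a ord0) n / `|val (a ord0) n|.
have wb : forall n, `|wf n| <= `|val (1 : S) n|.
  move=> n; rewrite v1 normr1 /wf; case: eqP => [_|A0]; first by rewrite normr1.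
  have nA : `|val (a ord0) n| != 0 by rewrite normr_eq0; apply/eqP.
  by rewrite normrM normfV normr_id divff.
pose W := mkS (tdom wb).
pose c l := W * conjS (a (lift ord0 l)).
pose u := a ord0 + \sum_(l < N) c l * a (lift ord0 l).
pose g : S := 2 * (N.+1%:R * (1 + \sum_i b i * conjS (b i))) ^+ 2.
have uE : forall n, val u n = val (a ord0) n +
   \sum_(l < N) (wf n * conjc (val (a (lift ord0 l)) n)) * val (a (lift ord0 l)) n.
  move=> n; rewrite rmorphD rmorph_sum /= fct_sumE; congr (_ + _).
have gE : forall n, val g n = 2 * (N.+1%:R * (1 + \sum_i val (b i) n * conjc (val (b i) n))) ^+ 2.
  move=> n; rewrite /g !(vM, vX, vD, vnat, v1', vsum).
  by under eq_bigr do rewrite vM.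
have K n := @ckey R N _ _ (Hn n).
have vb : forall n, `|(val u n)^-1| <= `|val g n|.
  by move=> n; rewrite uE gE; case: (K n).
exists c, (mkS (tdom vb)).
apply: val_inj; apply: funext => n; rewrite vM v1'; apply: mulVf.
by rewrite uE; case: (K n).
Qed.
End Glue.

Theorem corollary1p6 (R : realType) (d : nat) :
  (0 < d)%N -> hermite_ring (sprime R d).
Proof.
move=> _ N a [b Hb].
have [c [v Hv]] := @analytic R d N a b Hb.
exact: (@herm_alg (sprime R d) N a c v Hv).
Qed.
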